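(* There exists an infinite $7/3$-power-free word over $\{0,1\}$ that contains a square beginning at every position.
   Context: A finite word $w$ is an $\alpha$-power ($\alpha$ rational) if $w = x^n x'$ with $x$ nonempty, $x'$ a prefix of $x$, and $\alpha = n + |x'|/|x|$. A word is $\alpha$-power-free if none of its factors (contiguous subwords) is an $\alpha$-power. A square is a word $xx$ with $x$ nonempty. *)

(* Defs.v *)
From mathcomp Require Import all_boot.
Set Implicit Arguments. Unset Strict Implicit. Unset Printing Implicit Defensive.

(* An infinite word over {0,1} is a function nat -> bool (false = 0, true = 1). *)
Definition infword := nat -> bool.

Definition factor (w : infword) (i len : nat) : seq bool := mkseq (fun k => w (i + k)) len.

Definition seqpow (T : Type) (x : seq T) (n : nat) : seq T := flatten (nseq n x).

(* u is an (a/b)-power: u = x^n x' with x nonempty, x' a prefix of x, and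
   a/b = n + |x'|/|x|, i.e. b * (n*|x| + |x'|) = a * |x|. *)
Definition is_frac_power (a b : nat) (u : seq bool) : Prop :=
  exists (x x' : seq bool) (n : nat),
    [/\ 0 < size x, prefix x' x, u = seqpow x n ++ x' &
        b * (n * size x + size x') = a * size x].

Definition frac_power_free (a b : nat) (w : infword) : Prop :=
  forall i len, ~ is_frac_power a b (factor w i len).

Definition square_at (w : infword) (i : nat) : Prop :=
  exists x : seq bool, 0 < size x /\ factor w i (2 * size x) = x ++ x.

(* Main.v *)
Require Import Defs.
From mathcomp Require Import all_boot.
From mathcomp Require Import zify.

Set Implicit Arguments. Unset Strict Implicit. Unset Printing Implicit Defensive.

Fixpoint Vf (f i : nat) : bool :=
  match f with
  | 0 => false
  | f'.+1 => match i with
            | 0 => false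
            | k.+1 => xorb (Vf f' (k %/ 4)) ((k %% 4 == 1) || (k %% 4 == 2))
            end
  end.

Definition V (i : nat) : bool := Vf i i.

Lemma Vf_eq f g i : i <= f -> i <= g -> Vf f i = Vf g i.
Proof.
elim: f g i => [|f IH] [|g] [|k] //= hf hg; try lia.
by rewrite (IH g); try lia.
Qed.

Lemma V0 : V 0 = false. Proof. by []. Qed.

Lemma VS k : V k.+1 = xorb (V (k %/ 4)) ((k %% 4 == 1) || (k %% 4 == 2)).
Proof. by rewrite /V /= (@Vf_eq k (k %/ 4)); lia. Qed.

Definition mu (X : nat -> bool) (n : nat) : bool := xorb (X (n %/ 2)) (n %% 2 == 1).

Definition W := mu V.

Lemma VmuW k : V k.+1 = mu W k.
Proof.
rewrite VS /W /mu.
have -> : k %/ 2 %/ 2 = k %/ 4 by lia.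
have [H|[H|[H|H]]] : k %% 4 = 0 \/ k %% 4 = 1 \/ k %% 4 = 2 \/ k %% 4 = 3 by lia.
- have -> : k %% 2 = 0 by lia. have -> : k %/ 2 %% 2 = 0 by lia. rewrite H. by case: (V _).
- have -> : k %% 2 = 1 by lia. have -> : k %/ 2 %% 2 = 0 by lia. rewrite H. by case: (V _).
- have -> : k %% 2 = 0 by lia. have -> : k %/ 2 %% 2 = 1 by lia. rewrite H. by case: (V _).
- have -> : k %% 2 = 1 by lia. have -> : k %/ 2 %% 2 = 1 by lia. rewrite H. by case: (V _).
Qed.

Lemma mu_ev X m : mu X (2 * m) = X m.
Proof. rewrite /mu. have -> : 2 * m %/ 2 = m by lia. have -> : 2 * m %% 2 = 0 by lia. by case: (X m). Qed.

Lemma mu_od X m : mu X (2 * m).+1 = ~~ X m.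
Proof. rewrite /mu. have -> : (2 * m).+1 %/ 2 = m by lia. have -> : (2 * m).+1 %% 2 = 1 by lia. by case: (X m). Qed.

Lemma mu_even_diff X n : n %% 2 = 0 -> mu X n != mu X n.+1.
Proof.
move=> h; have -> : n = 2 * (n %/ 2) by lia.
by rewrite mu_ev mu_od; case: (X _).
Qed.

Definition no3 (X : nat -> bool) := forall i, ~ (X i = X i.+1 /\ X i.+1 = X i.+2).

Lemma no3_mu X : no3 (mu X).
Proof.
move=> i [h1 h2].
have [e|e] : i = 2 * (i %/ 2) \/ i = (2 * (i %/ 2)).+1 by lia.
- move: h1; rewrite e mu_od mu_ev. by case: (X _).
- move: h2; have -> : i.+1 = 2 * (i %/ 2).+1 by lia.
  rewrite mu_ev.
  rewrite mu_od. by case: (X _).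
Qed.

Lemma alt_mu X j : no3 X -> ~ (forall k, k < 4 -> mu X (j + k) != mu X (j + k).+1).
Proof.
move=> hX h.
have h0 := h 0 isT; have h1 := h 1 isT; have h2 := h 2 isT; have h3 := h 3 isT.
set m := j %/ 2.
have [e|e] : j = 2 * m \/ j = (2 * m).+1 by rewrite /m; lia.
- apply: (hX m); move: h1 h3.
  have -> : j + 1 = (2 * m).+1 by lia.
  have -> : (2 * m).+2 = 2 * m.+1 by lia.
  have -> : j + 3 = (2 * m.+1).+1 by lia.
  have -> : (2 * m.+1).+2 = 2 * m.+2 by lia.
  rewrite !mu_ev !mu_od.
  by case: (X m); case: (X m.+1); case: (X m.+2).
- apply: (hX m); move: h0 h2.
  have -> : j + 0 = (2 * m).+1 by lia.
  have -> : (2 * m).+2 = 2 * m.+1 by lia.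
  have -> : j + 2 = (2 * m.+1).+1 by lia.
  have -> : (2 * m.+1).+2 = 2 * m.+2 by lia.
  rewrite !mu_ev !mu_od.
  by case: (X m); case: (X m.+1); case: (X m.+2).
Qed.

Definition rep (w : nat -> bool) (s p L : nat) :=
  forall t, s <= t -> t + p < s + L -> w t = w (t + p).

Lemma rep_odd X s p L : no3 X -> rep (mu X) s p L -> p %% 2 = 1 -> 3 <= p -> 2 * p + 1 <= L -> False.
Proof.
move=> hX h hp hp3 hL.
apply: (alt_mu (j := s) hX) => k hk.
have [A|B] : k + 1 + p < L \/ p <= k by lia.
- have e1 := h (s + k) (leq_addr _ _) ltac:(lia).
  have e2 := h (s + k).+1 ltac:(lia) ltac:(lia).
  have [ev|od] : (s + k) %% 2 = 0 \/ (s + k + p) %% 2 = 0 by lia.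
  + exact: mu_even_diff.
  + rewrite e1 e2. have -> : (s + k).+1 + p = (s + k + p).+1 by lia.
    exact: mu_even_diff.
- have [ev|od] : (s + k) %% 2 = 0 \/ (s + k - p) %% 2 = 0 by lia.
    exact: mu_even_diff.
  have e1 := h (s + k - p) ltac:(lia) ltac:(lia).
  have e2 := h (s + k - p).+1 ltac:(lia) ltac:(lia).
  move: e1 e2.
  have -> : s + k - p + p = s + k by lia.
  have -> : (s + k - p).+1 + p = (s + k).+1 by lia.
  move=> <- <-.
  exact: mu_even_diff.
Qed.

Lemma desub X s q L : 2 * q < L -> rep (mu X) s (2 * q) L ->
  rep X (s %/ 2) q ((s + L).+1 %/ 2 - s %/ 2).
Proof.
move=> hL h i hi1 hi2.
have [A|B] : s <= 2 * i \/ s = (2 * i).+1 by lia.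
- have := h (2 * i) A ltac:(lia).
  have -> : 2 * i + 2 * q = 2 * (i + q) by lia.
  by rewrite !mu_ev.
- have := h (2 * i).+1 ltac:(lia) ltac:(lia).
  have -> : (2 * i).+1 + 2 * q = (2 * (i + q)).+1 by lia.
  rewrite !mu_od. by case: (X i); case: (X (i + q)).
Qed.

Lemma rep_shift s p L : rep V s.+1 p L -> rep (mu W) s p L.
Proof.
move=> h t h1 h2. rewrite -!VmuW.
have := h t.+1 ltac:(lia) ltac:(lia). by have -> : t.+1 + p = (t + p).+1 by lia.
Qed.

Lemma rep_pre p L : rep V 0 p L -> rep V 1 p (L - 1).
Proof. move=> h t h1 h2. apply: h; lia. Qed.

Lemma no3_V : no3 V.
Proof.
move=> [|k].
  have -> : V 2 = true by vm_compute. have -> : V 1 = false by vm_compute. by case.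
rewrite !VmuW. exact: no3_mu.
Qed.

Lemma no3_W : no3 W.
Proof. exact: no3_mu. Qed.

Lemma V4 r : 0 < r -> V (4 * r) = V r.-1.
Proof.
move=> hr. have -> : 4 * r = (4 * r).-1.+1 by lia.
rewrite VS. have -> : (4 * r).-1 %/ 4 = r.-1 by lia.
have -> : (4 * r).-1 %% 4 = 3 by lia. by case: (V _).
Qed.

Lemma V4m r : 0 < r -> V (4 * r).-1 = ~~ V r.-1.
Proof.
move=> hr. have -> : (4 * r).-1 = (4 * r).-2.+1 by lia.
rewrite VS. have -> : (4 * r).-2 %/ 4 = r.-1 by lia.
have -> : (4 * r).-2 %% 4 = 2 by lia. by case: (V _).
Qed.

Lemma small_wit p L t : rep V 0 p L -> t + p < L -> V t != V (t + p) -> False.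
Proof. move=> h ht; rewrite (h t) //; by rewrite eqxx. Qed.

Lemma prefix_case p L : 0 < p -> 7 * p <= 3 * L -> ~ rep V 0 p L.
Proof.
move=> hp hL hr.
have S1 : forall t, t + p < L -> V t != V (t + p) -> False.
  move=> t ht hn; exact: (small_wit hr ht hn).
have [sm|big] : p \in [:: 1; 2; 3; 4; 5; 6; 8; 12; 20; 24] \/ p \notin [:: 1; 2; 3; 4; 5; 6; 8; 12; 20; 24].
  by case: (p \in _); [left|right].
- move: sm; rewrite !inE => /orP[/eqP e|/orP[/eqP e|/orP[/eqP e|/orP[/eqP e|/orP[/eqP e|
    /orP[/eqP e|/orP[/eqP e|/orP[/eqP e|/orP[/eqP e|/eqP e]]]]]]]]]; subst p.
  + by apply: (S1 1); [lia|vm_compute].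
  + by apply: (S1 0); [lia|vm_compute].
  + by apply: (S1 0); [lia|vm_compute].
  + by apply: (S1 5); [lia|vm_compute].
  + by apply: (S1 1); [lia|vm_compute].
  + by apply: (S1 0); [lia|vm_compute].
  + by apply: (S1 1); [lia|vm_compute].
  + by apply: (S1 0); [lia|vm_compute].
  + by apply: (S1 5); [lia|vm_compute].
  + by apply: (S1 1); [lia|vm_compute].
- have hne : forall c, c \in [:: 1; 2; 3; 4; 5; 6; 8; 12; 20; 24] -> p <> c.
    by move=> c hc e; move: big; rewrite e hc.
  have n1 := hne 1 isT; have n2 := hne 2 isT; have n3 := hne 3 isT; have n4 := hne 4 isT.
  have n5 := hne 5 isT; have n6 := hne 6 isT; have n8 := hne 8 isT; have n12 := hne 12 isT.
  have n20 := hne 20 isT; have n24 := hne 24 isT.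
  have h1 := rep_shift (rep_pre hr).
  have [po|pe] : p %% 2 = 1 \/ p %% 2 = 0 by lia.
    apply: (rep_odd no3_W h1 po); lia.
  set q := p %/ 2. have eq : p = 2 * q by rewrite /q; lia.
  rewrite eq in h1.
  have h2 := @desub W 0 q (L - 1) ltac:(lia) h1.
  set L1 := _ - _ in h2. have hL1 : 2 * L1 >= L - 1 by rewrite /L1; lia.
  rewrite /= div0n in h2.
  have [qo|qe] : q %% 2 = 1 \/ q %% 2 = 0 by lia.
    apply: (rep_odd no3_V h2 qo); lia.
  set r := q %/ 2. have er : q = 2 * r by rewrite /r; lia.
  rewrite er in h2.
  have h3 := @desub V 0 r L1 ltac:(lia) h2.
  set L2 := _ - _ in h3. have hL2 : 2 * L2 >= L1 by rewrite /L2; lia.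
  rewrite /= div0n in h3.
  have hr0 : 0 < r by lia.
  have eVp : V 0 = V p by have := hr 0 (leqnn 0) ltac:(lia).
  have [r4|r4] : r %% 4 = 0 \/ r %% 4 <> 0 by lia.
  + set r' := r %/ 4. have er' : r = 4 * r' by rewrite /r'; lia.
    have hr' : 0 < r' by lia.
    have eVr : V 0 = V r by have := h3 0 (leqnn 0) ltac:(lia).
    have e4 : p = 4 * r by lia.
    move: eVp eVr. rewrite e4 V4 // er' V4 // V4m // V0.
    by case: (V _).
  + have h4 := rep_shift (rep_pre h3).
    have [ro|re] : r %% 2 = 1 \/ r %% 2 = 0 by lia.
      apply: (rep_odd no3_W h4 ro); lia.
    set q' := r %/ 2. have eq' : r = 2 * q' by rewrite /q'; lia.
    rewrite eq' in h4.
    have h5 := @desub W 0 q' (L2 - 1) ltac:(lia) h4.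
    set L3 := _ - _ in h5. have hL3 : 2 * L3 >= L2 - 1 by rewrite /L3; lia.
    rewrite /= div0n in h5.
    apply: (rep_odd no3_V h5); lia.
Qed.

Theorem main_free p : forall s L, 0 < p -> 7 * p <= 3 * L -> ~ rep V s p L.
Proof.
elim/ltn_ind: p => p IH [|k] L hp hL hr.
  exact: (prefix_case hp hL hr).
have h1 := rep_shift hr.
have [po|pe] : p %% 2 = 1 \/ p %% 2 = 0 by lia.
  have [p1|p3] : p = 1 \/ 3 <= p by lia.
    subst p. move: (@no3_mu W k) => hn; apply: hn; split.
      by have := h1 k (leqnn k) ltac:(lia); rewrite addn1.
    by have := h1 k.+1 ltac:(lia) ltac:(lia); rewrite addn1.
  apply: (rep_odd no3_W h1 po); lia.
set q := p %/ 2. have eq : p = 2 * q by rewrite /q; lia.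
rewrite eq in h1.
have h2 := @desub W k q L ltac:(lia) h1.
set L1 := _ - _ in h2. have hL1 : 2 * L1 >= L by rewrite /L1; lia.
have [qo|qe] : q %% 2 = 1 \/ q %% 2 = 0 by lia.
  have [q1|q3] : q = 1 \/ 3 <= q by lia.
    rewrite q1 in h2. move: (@no3_mu V (k %/ 2)) => hn; apply: hn; split.
      by have := h2 (k %/ 2) (leqnn _) ltac:(lia); rewrite addn1.
    by have := h2 (k %/ 2).+1 ltac:(lia) ltac:(lia); rewrite addn1.
  apply: (rep_odd no3_V h2 qo); lia.
set r := q %/ 2. have er : q = 2 * r by rewrite /r; lia.
rewrite er in h2.
have h3 := @desub V (k %/ 2) r L1 ltac:(lia) h2.
set L2 := _ - _ in h3. have hL2 : 2 * L2 >= L1 by rewrite /L2; lia.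
apply: (IH r _ _ _ _ _ h3); lia.
Qed.

Lemma overlap i : exists P, 0 < P /\ forall t, t <= P -> V (i + t) = V (i + t + P).
Proof.
elim/ltn_ind: i => [[|k] IH].
  exists 4; split => // t ht.
  by case: t ht => [|[|[|[|[|t]]]]] // _; vm_compute.
have [P [hP hQ]] := IH (k %/ 4) ltac:(lia).
exists (4 * P); split; first lia.
move=> t ht.
have -> : k.+1 + t = (k + t).+1 by lia.
have -> : (k + t).+1 + 4 * P = (k + t + 4 * P).+1 by lia.
rewrite !VS.
have -> : (k + t + 4 * P) %% 4 = (k + t) %% 4 by lia.
have -> : (k + t + 4 * P) %/ 4 = k %/ 4 + ((k + t) %/ 4 - k %/ 4) + P by lia.
rewrite -hQ; last by lia.
by have -> : k %/ 4 + ((k + t) %/ 4 - k %/ 4) = (k + t) %/ 4 by lia.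
Qed.

Lemma size_seqpow (x : seq bool) n : size (seqpow x n) = n * size x.
Proof. by elim: n => [|n IH] //=; rewrite /seqpow /= size_cat -/(seqpow x n) IH mulSn. Qed.

Lemma nth_pow (x x' : seq bool) n k : 0 < size x -> prefix x' x ->
  k < size (seqpow x n ++ x') -> nth false (seqpow x n ++ x') k = nth false x (k %% size x).
Proof.
move=> hx hp; have hs : size x' <= size x by apply: size_prefix.
elim: n k => [|n IH] k hk.
  move: hk; rewrite /seqpow /= => hk.
  move: hp; rewrite prefixE => /eqP <-.
  rewrite nth_take // modn_small //; lia.
have e : seqpow x n.+1 ++ x' = x ++ (seqpow x n ++ x') by rewrite /seqpow /= catA.
move: hk; rewrite e nth_cat size_cat => hk.
case: ifP => h.
  by rewrite modn_small.
move/negbT: h; rewrite -leqNgt => h.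
rewrite IH; last first. rewrite size_cat. move: hk. rewrite size_cat. set a := size (seqpow x n). set b := size x. set c := size x'. lia.
have hk2 : size x <= k by lia.
by rewrite -{2}(subnK hk2) modnDr.
Qed.

Theorem theorem6 :
  exists w : infword, frac_power_free 7 3 w /\ forall i : nat, square_at w i.
Proof.
exists V; split.
- move=> i len [x [x' [n [hx hp hu heq]]]].
  have hsz : size (seqpow x n ++ x') = len by rewrite -hu size_mkseq.
  move: (hsz); rewrite size_cat size_seqpow => hsz'.
  apply: (@main_free (size x) i len hx); first lia.
  move=> t h1 h2.
  have f1 : V t = nth false (factor V i len) (t - i).
    rewrite nth_mkseq; last lia. by congr V; lia.
  have f2 : V (t + size x) = nth false (factor V i len) (t - i + size x).
    rewrite nth_mkseq; last lia. by congr V; lia.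
  rewrite f1 f2 hu !nth_pow //; try lia.
  by rewrite modnDr.
- move=> i. have [P [hP hQ]] := overlap i.
  exists (mkseq (fun k => V (i + k)) P); rewrite size_mkseq; split => //.
  apply: (@eq_from_nth _ false).
    by rewrite size_mkseq size_cat size_mkseq; lia.
  move=> t; rewrite size_mkseq => ht.
  rewrite nth_mkseq // nth_cat size_mkseq.
  case: ifP => h; first by rewrite nth_mkseq.
  move/negbT: h; rewrite -leqNgt => h.
  rewrite nth_mkseq; last lia.
  have -> : i + t = i + (t - P) + P by lia.
  by rewrite hQ //; lia.
Qed.
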